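(* Let $P$ be a dcpo. The following are equivalent: (1) $\Sigma P$ is a $d^{\ast}$-space; (2) for every family $\{{\uparrow}F_d\mid d\in D\}\subseteq\mathbf{Fin}\,P$ that is filtered under inclusion, every ${\uparrow}F\in\mathbf{Fin}\,P$ and every nonempty Scott open set $U$, if $\bigcap_{d\in D}{\uparrow}F_d\cap{\uparrow}F\subseteq U$, then ${\uparrow}F_d\cap{\uparrow}F\subseteq U$ for some $d\in D$.
   Context: A dcpo is a poset in which every directed subset has a supremum. A subset $U$ of a poset $P$ is Scott open if $U={\uparrow}U$ and, for every directed $D$ whose supremum exists, $\bigvee D\in U$ implies $D\cap U\neq\emptyset$. The space $\Sigma P$ is $P$ with the Scott topology; its specialization order is the order of $P$. $\mathbf{Fin}\,P=\{{\uparrow}F\mid F\subseteq P$ nonempty finite$\}$. A family of sets is filtered if any two of its members contain a common member. All spaces are $T_0$. The specialization order of a space $X$ is given by $x\le y$ iff $x\in cl(\{y\})$. A $T_0$-space $X$ is a $d^{\ast}$-space if for every directed $D\subseteq X$ (in the specialization order), every $x\in X$ and every nonempty open $U\subseteq X$, $\bigcap_{d\in D}{\uparrow}d\cap{\uparrow}x\subseteq U$ implies ${\uparrow}d\cap{\uparrow}x\subseteq U$ for some $d\in D$. *)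

(* Defs.v *)
From HB Require Import structures.
From mathcomp Require Import all_boot all_order.
From mathcomp Require Import boolp classical_sets cardinality topology.
Import Order.TTheory.

Set Implicit Arguments.
Unset Strict Implicit.
Unset Printing Implicit Defensive.

Local Open Scope classical_set_scope.
Local Open Scope order_scope.

Definition directed_wrt {X : Type} (R : X -> X -> Prop) (D : set X) :=
  D !=set0 /\ forall x y, D x -> D y -> exists2 z, D z & R x z /\ R y z.

Section PosetDefs.
Context {disp : Order.disp_t} {T : porderType disp}.

Definition directed (D : set T) := directed_wrt (fun x y => x <= y) D.

Definition is_sup (D : set T) (s : T) :=
  ubound D s /\ forall u, ubound D u -> s <= u.

Definition is_dcpo := forall D : set T, directed D -> exists s, is_sup D s.

Definition upset (A : set T) : set T := [set y | exists2 x, A x & x <= y].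

Definition scott_open (U : set T) :=
  U = upset U /\
  forall (D : set T) (s : T), directed D -> is_sup D s -> U s -> D `&` U !=set0.

(** members of Fin P: ↑F with F nonempty finite *)
Definition fin_generator (F : set T) := finite_set F /\ F !=set0.

Definition filtered_family {I : Type} (A : I -> set T) :=
  inhabited I /\ forall i j, exists k, A k `<=` A i /\ A k `<=` A j.

Definition fin_dstar_condition :=
  forall (I : Type) (F : I -> set T) (G U : set T),
    (forall i, fin_generator (F i)) ->
    filtered_family (fun i => upset (F i)) ->
    fin_generator G ->
    scott_open U -> U !=set0 ->
    (\bigcap_i upset (F i)) `&` upset G `<=` U ->
    exists i, upset (F i) `&` upset G `<=` U.

Lemma scott_openT : scott_open setT.
Proof.
split; first by apply/seteqP; split=> x // _; exists x.
by move=> D s [[d Dd] _] _ _; exists d.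
Qed.

Lemma scott_openI : setI_closed scott_open.
Proof.
move=> U V [eU hU] [eV hV]; split.
  apply/seteqP; split=> [x Ux|y [x [Ux Vx] xy]]; first by exists x.
  by split; [rewrite eU; exists x | rewrite eV; exists x].
move=> D s dD sD [Us Vs].
have [a [Da Ua]] := hU D s dD sD Us.
have [b [Db Vb]] := hV D s dD sD Vs.
have [c Dc [ac bc]] := dD.2 a b Da Db.
by exists c; split=> //; split; [rewrite eU; exists a | rewrite eV; exists b].
Qed.

Lemma scott_open_bigU (I : Type) (f : I -> set T) :
  (forall i, scott_open (f i)) -> scott_open (\bigcup_i f i).
Proof.
move=> hf; split.
  apply/seteqP; split=> [x Ux|y [x [i _ fxi] xy]]; first by exists x.
  by exists i => //; rewrite (hf i).1; exists x.
move=> D s dD sD [i _ fis].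
have [d [Dd fid]] := (hf i).2 D s dD sD fis.
by exists d; split=> //; exists i.
Qed.

End PosetDefs.

Definition scott_space {disp : Order.disp_t} (T : porderType disp) : Type := T.

Section ScottTopology.
Context {disp : Order.disp_t} {T : porderType disp}.
HB.instance Definition _ := Choice.on (scott_space T).
HB.instance Definition _ :=
  isOpenTopological.Build (scott_space T)
    (@scott_openT disp T) (@scott_openI disp T) (@scott_open_bigU disp T).
End ScottTopology.

Section DStar.
Context {X : topologicalType}.

Definition spec_le (x y : X) := closure [set y] x.
Definition spec_up (x : X) : set X := [set y | spec_le x y].

Definition dstar_space :=
  @kolmogorov_space X /\
  forall (D : set X) (x : X) (U : set X),
    directed_wrt spec_le D -> open U -> U !=set0 ->
    (\bigcap_(d in D) spec_up d) `&` spec_up x `<=` U ->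
    exists2 d, D d & spec_up d `&` spec_up x `<=` U.
End DStar.

(* Main.v *)
Require Import Defs.
From HB Require Import structures.
From mathcomp Require Import all_boot all_order.
From mathcomp Require Import boolp classical_sets cardinality topology.
Import Order.TTheory.
Set Implicit Arguments.
Unset Strict Implicit.
Unset Printing Implicit Defensive.
Local Open Scope order_scope.
Local Open Scope classical_set_scope.

Lemma dir_fin (X : Type) (Y : eqType) (R : X -> X -> Prop) (D : set X)
  (Q : Y -> X -> Prop) (s : seq Y) :
  directed_wrt R D -> (forall y a b, Q y a -> R a b -> Q y b) ->
  (forall y, y \in s -> exists2 a, D a & Q y a) ->
  exists2 a, D a & forall y, y \in s -> Q y a.
Proof.
move=> [[a0 Da0] dD] Qm; elim: s => [|y s IH] hs.
  by exists a0.
have [a Da Qa] := hs y (mem_head _ _).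
have [b Db Qb] := IH (fun z zs => hs z (mem_behead (s := y :: s) zs)).
have [c Dc [ac bc]] := dD a b Da Db.
exists c => // z; rewrite in_cons => /orP[/eqP->|zs]; first exact: Qm ac.
exact: Qm (Qb z zs) bc.
Qed.

Section Poset.
Context {disp : Order.disp_t} {T : porderType disp}.

Lemma upset1 (a z : T) : upset [set a] z <-> a <= z.
Proof. by split=> [[x -> //]|h]; exists a. Qed.

Lemma scott_open_ndown (y : T) : scott_open [set z | ~ z <= y].
Proof.
split.
  apply/seteqP; split=> [z zy|w [z zy zw] wy]; first by exists z.
  by apply: zy; exact: le_trans wy.
move=> D s dD [ub lub] sy; apply: contrapT => nD; apply: sy; apply: lub.
move=> d Dd; apply: contrapT => dy; apply: nD; by exists d.
Qed.

Lemma rudin (I : Type) (A : I -> set T) :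
  inhabited I -> (forall i, finite_set (A i)) -> (forall i, A i !=set0) ->
  (forall i j, exists k, A k `<=` upset (A i) /\ A k `<=` upset (A j)) ->
  exists D : set T, [/\ directed D, D `<=` \bigcup_i A i &
     forall i, D `&` A i !=set0].
Proof.
move=> [i0] Afin A0 Afil.
pose Ucup := \bigcup_i A i.
pose PP (C : set T) := (forall a b, C a -> Ucup b -> b <= a -> C b) /\
   (forall i, C `&` A i !=set0).
pose PP' (B : set T) := PP (~` B).
have [B [PB Bmax]] : exists B, PP' B /\ forall B', B `<` B' -> ~ PP' B'.
  apply: Zorn_bigcup => F FP Ftot; split.
    move=> a b /= aF Ub ba [X FX Xb]; apply: aF; exists X => //.
    apply: contrapT => Xa; have := (FP X FX).1 a b Xa Ub ba; exact.
  move=> i; apply: contrapT => nm.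
  have [s As] := (finite_seqP (A i)).1 (Afin i).
  have hs : forall y, y \in s -> exists2 X, F X & X y.
    move=> y ys; apply: contrapT => nX; apply: nm; exists y; split; last by rewrite As.
    by move=> [X FX Xy]; apply: nX; exists X.
  have [y0 Ay0] := A0 i; have : y0 \in s by rewrite As in Ay0.
  move=> /hs [X0 FX0 _].
  have dF : directed_wrt (fun X Y => X `<=` Y) F.
    split; first by exists X0.
    move=> X Y FX FY; have [XY|YX] := Ftot X Y FX FY.
      by exists Y => //; split; [exact: XY | exact: subset_refl].
    by exists X => //; split; [exact: subset_refl | exact: YX].
  have [X FX Xs] := dir_fin (Q := fun y X => X y) dF
     (fun y a b ya ab => ab y ya) hs.
  have [z [nXz Az]] := (FP X FX).2 i; apply: nXz; apply: Xs.
  by rewrite As in Az.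
pose C := ~` B.
have PC : PP C by exact: PB.
exists (C `&` Ucup); split.
- split.
    have [z [Cz Az]] := PC.2 i0; exists z; split => //; by exists i0.
  move=> x y [Cx Ux] [Cy Uy].
  have key : forall x, C x -> Ucup x -> exists i, C `&` A i `<=` upset [set x].
    move=> u Cu Uu; apply: contrapT => nex.
    have : B `<` ~` (C `&` ~` upset [set u]).
      split.
        by move=> w Bw [Cw _].
      move=> sub; apply: Cu; apply: sub => -[_]; apply; exact/upset1.
    move=> /Bmax; apply; rewrite /PP' setCK; split.
      move=> a b [Ca nua] Ub ba; split; first exact: PC.1 Ca Ub ba.
      by move=> /upset1 ub; apply: nua; apply/upset1; exact: le_trans ba.
    move=> i; apply: contrapT => nm; apply: nex; exists i => w [Cw Aw].
    apply: contrapT => nw; apply: nm; exists w; split => //.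
  have [i Hi] := key x Cx Ux; have [j Hj] := key y Cy Uy.
  have [k [ki kj]] := Afil i j.
  have [z [Cz Az]] := PC.2 k.
  have Uz : Ucup z by exists k.
  exists z; first by split.
  have [w Aw wz] := ki z Az; have [w' Aw' wz'] := kj z Az.
  have Cw : C w by apply: PC.1 Cz _ wz; exists i.
  have Cw' : C w' by apply: PC.1 Cz _ wz'; exists j.
  have /upset1 xw := Hi w (conj Cw Aw); have /upset1 yw' := Hj w' (conj Cw' Aw').
  by split; [exact: le_trans wz|exact: le_trans wz'].
- by move=> z [].
- move=> i; have [z [Cz Az]] := PC.2 i; exists z; split => //; split => //.
  by exists i.
Qed.

End Poset.

Section Main.
Context {disp : Order.disp_t} {P : porderType disp}.

Lemma open_scott (U : set (scott_space P)) : open U <-> scott_open (T := P) U.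
Proof. by []. Qed.

Lemma spec_leP (x y : scott_space P) : spec_le x y <-> (x : P) <= y.
Proof.
split.
  move=> cl; apply: contrapT => nxy.
  have : nbhs x [set z : scott_space P | ~ (z : P) <= y].
    by apply: open_nbhs_nbhs; split => //; exact: scott_open_ndown.
  move=> /cl [z [-> /= zz]]; exact: zz.
move=> xy B; rewrite nbhsE => -[B' [oB' B'x] B'B].
exists y; split => //; apply: B'B.
have [eB _] := (open_scott B').1 oB'.
by rewrite eB; exists x.
Qed.

Lemma spec_upE (x : scott_space P) : spec_up x = upset (T := P) [set x].
Proof. by apply/seteqP; split=> z; rewrite /spec_up /= spec_leP upset1. Qed.

End Main.

Theorem mainTheorem2 (disp : Order.disp_t) (P : porderType disp) :
  is_dcpo (T := P) ->
  (dstar_space (X := scott_space P) <-> fin_dstar_condition (T := P)).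
Proof.
move=> _; split.
- move=> [_ ds] I F G U hF hfil hG oU U0 hsub.
  apply: contrapT => nex.
  have nall : forall i, ~ (upset (F i) `&` upset G `<=` U).
    by move=> i h; apply: nex; exists i.
  pose A i := [set a | F i a /\ exists y, a <= y /\ upset G y /\ ~ U y].
  have [D [dD DA DmA]] : exists D : set P, [/\ directed D, D `<=` \bigcup_i A i &
     forall i, D `&` A i !=set0].
    apply: rudin.
    - exact: hfil.1.
    - by move=> i; apply: sub_finite_set (hF i).1 => a [].
    - move=> i; apply: contrapT => nA; apply: (nall i) => y [[a Fa ay] Gy].
      apply: contrapT => nUy; apply: nA; exists a; split => //; by exists y.
    - move=> i j; have [k [ki kj]] := hfil.2 i j.
      have sub : forall l, upset (F k) `<=` upset (F l) -> A k `<=` upset (A l).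
        move=> l kl a [Fa [y [ay [Gy nUy]]]].
        have [b Fb ba] := kl a (ex_intro2 _ _ a Fa (lexx a)).
        exists b => //; split => //; exists y; split => //; exact: le_trans ay.
      by exists k; split; [exact: sub ki | exact: sub kj].
  have [s Gs] := (finite_seqP G).1 hG.1.
  have dD' : directed_wrt (@spec_le (scott_space P)) D.
    by case: dD => D0 dD; split => // x y Dx Dy;
      have [z Dz [xz yz]] := dD x y Dx Dy; exists z => //; rewrite !spec_leP.
  have hg : forall g, g \in s -> exists2 d, D d &
       upset [set d] `&` upset [set g] `<=` U.
    move=> g gs; have [d Dd hd] : exists2 d : scott_space P, D d & spec_up d `&` @spec_up (scott_space P) g `<=` U.
      apply: (ds D (g : scott_space P) U dD' oU U0) => z [zD zg]; apply: hsub; split; last first.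
        exists g; [by rewrite Gs | exact: (proj1 (spec_leP _ _) zg)].
      move=> i _; have [d [Dd Ad]] := DmA i; exists d; first exact: Ad.1.
      exact: (proj1 (spec_leP _ _) (zD d Dd)).
    by exists d => //; rewrite -!spec_upE.
  have Qm : forall (g a b : P), upset [set a] `&` upset [set g] `<=` U -> a <= b ->
      upset [set b] `&` upset [set g] `<=` U.
    move=> g a b h ab z [/upset1 bz gz]; apply: h; split => //.
    by apply/upset1; exact: le_trans bz.
  have [d Dd hd] := dir_fin (Q := fun g d => upset [set d] `&` upset [set g] `<=` U)
     dD Qm hg.
  have [i _ [Fd [y [dy [[g Gg gy] nUy]]]]] := DA d Dd.
  apply: nUy; apply: (hd g); first by rewrite Gs in Gg.
  by split; apply/upset1.
- move=> cond; split.
    move=> x y nxy.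
    have [nxy'|nyx] : ~ (x : P) <= y \/ ~ (y : P) <= x.
      apply: contrapT => /not_orP [/contrapT h1 /contrapT h2]; apply: (negP nxy).
      by apply/eqP; apply: le_anti; rewrite h1 h2.
    + exists [set z : scott_space P | ~ (z : P) <= y]; left; split.
        apply/mem_set; apply: open_nbhs_nbhs; split => //; exact: scott_open_ndown.
      by apply/mem_set => /= h; apply: h.
    + exists [set z : scott_space P | ~ (z : P) <= x]; right; split.
        apply/mem_set; apply: open_nbhs_nbhs; split => //; exact: scott_open_ndown.
      by apply/mem_set => /= h; apply: h.
  move=> D x U [[d0 Dd0] dD] oU U0 hsub.
  pose I := {d : scott_space P | D d}.
  have [i hi] : exists i : I, upset [set (sval i : P)] `&` upset [set (x : P)] `<=` U.
    apply: (cond I (fun i => [set (sval i : P)]) [set (x : P)] U).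
    + by move=> i; split; [exact: finite_set1 | exists (sval i)].
    + split; first exact: inhabits (exist _ d0 Dd0).
      move=> [a Da] [b Db]; have [z Dz [az bz]] := dD a b Da Db.
      exists (exist _ z Dz); split => w /upset1 zw; apply/upset1;
        apply: le_trans zw; by rewrite -spec_leP.
    + by split; [exact: finite_set1 | exists (x : P)].
    + exact: oU.
    + exact: U0.
    + move=> z [zD zx]; apply: hsub; split; last by rewrite spec_upE.
      move=> d Dd; rewrite spec_upE; exact: (zD (exist _ d Dd)).
  by exists (sval i); [exact: (svalP i)| rewrite !spec_upE].
Qed.
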